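(* Let $(N_0,v)$ be the RS-game corresponding to an RS-situation $(N_0,c,w,P)$, and let $\xi(v)$ be defined by $\xi_0(v)=n\beta$ and $\xi_i(v)=v(\{0,i\})-\beta$ for $i\in N$, where $\beta=\min_{S\subseteq N,\,S\neq\emptyset}\frac{v(S_0)-v(S)}{s}$. Then $\xi(v)\in Core(N_0,v)$ and $\xi_0(v)>0$.
   Context: Let $c\in\mathbb{R}$. An RS-problem is a triple $(c,w,p)$ where $w:\mathbb{R}_+\to(c,+\infty)$ is decreasing (non-increasing) and continuous, and $p:\mathbb{R}_+\to\mathbb{R}$ is decreasing (non-increasing) and continuous, satisfies $p(0)>w(0)$, and there exists $q>0$ with $p(q)=c$. An RS-situation is a tuple $(N_0,c,w,P)$ where $N=\{1,\dots,n\}$ is the set of retailers, $0$ denotes the supplier, $N_0=N\cup\{0\}$, $P=(p_1,\dots,p_n)$, and $(c,w,p_i)$ is an RS-problem for each $i\in N$. For $S\subseteq N$ write $S_0=S\cup\{0\}$ and $s=|S|$. For $q\ge0$ and $\omega\in\mathbb{R}$, $\Pi_i^{ret}(q;\omega)=(p_i(q)-\omega)q$. For nonempty $S\subseteq N$, $(q_i^S)_{i\in S}$ is a fixed optimal solution of: maximize $\sum_{i\in S}(p_i(q_i)-w(q_S))q_i$ over $q\in\mathbb{R}_+^{S}$ subject to $p_i(q_i)\ge w(q_S)$ for all $i\in S$, where $q_S=\sum_{i\in S}q_i$; $q_S^S=\sum_{i\in S}q_i^S$. For $i\in N$, $q_i^c$ is a fixed optimal solution of: maximize $(p_i(q)-c)q$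 over $q\ge0$ subject to $p_i(q)\ge c$. The corresponding RS-game $(N_0,v)$ is the TU game on $N_0$ with $v(\emptyset)=0$ and, for all $S\subseteq N$, $v(S)=\sum_{i\in S}\Pi_i^{ret}(q_i^S;w(q_S^S))$ and $v(S_0)=\sum_{i\in S}\Pi_i^{ret}(q_i^c;c)$. The core is $Core(N_0,v)=\{x\in\mathbb{R}^{N_0}: \sum_{i\in N_0}x_i=v(N_0),\ \sum_{i\in T}x_i\ge v(T)\text{ for all }T\subset N_0\}$. *)

(* Defs.v *)
From HB Require Import structures.
From mathcomp Require Import all_boot all_order all_algebra.
From mathcomp Require Import all_classical all_reals all_analysis.
Set Implicit Arguments. Unset Strict Implicit. Unset Printing Implicit Defensive.
Import Order.TTheory GRing.Theory Num.Theory numFieldNormedType.Exports.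
Local Open Scope ring_scope.

Section RS.
Variable R : realType.

Definition nonincr_on_Rplus (f : R -> R) : Prop :=
  forall x y : R, 0 <= x -> x <= y -> f y <= f x.

Local Open Scope classical_set_scope.
Definition cont_on_Rplus (f : R -> R) : Prop :=
  {within [set x : R | 0 <= x], continuous f}.
Local Close Scope classical_set_scope.

Definition RS_problem (c : R) (w p : R -> R) : Prop :=
  [/\ forall x : R, 0 <= x -> c < w x,
      nonincr_on_Rplus w /\ cont_on_Rplus w,
      nonincr_on_Rplus p /\ cont_on_Rplus p,
      w 0 < p 0
    & exists q : R, 0 < q /\ p q = c].

(* RS-situation (N_0, c, w, P) with N = 'I_n, supplier = None *)
Definition RS_situation (n : nat) (c : R) (w : R -> R) (P : 'I_n -> R -> R) : Prop :=
  forall i : 'I_n, RS_problem c w (P i).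

Definition Pi_ret (p : R -> R) (q omega : R) : R := (p q - omega) * q.

Definition feasible_S n (w : R -> R) (P : 'I_n -> R -> R) (S : {set 'I_n})
  (q : 'I_n -> R) : Prop :=
  forall i : 'I_n, i \in S -> 0 <= q i /\ w (\sum_(j in S) q j) <= P i (q i).

Definition obj_S n (w : R -> R) (P : 'I_n -> R -> R) (S : {set 'I_n})
  (q : 'I_n -> R) : R :=
  \sum_(i in S) (P i (q i) - w (\sum_(j in S) q j)) * q i.

Definition optimal_S n (w : R -> R) (P : 'I_n -> R -> R) (S : {set 'I_n})
  (q : 'I_n -> R) : Prop :=
  feasible_S w P S q /\
  forall q' : 'I_n -> R, feasible_S w P S q' -> obj_S w P S q' <= obj_S w P S q.

Definition optimal_c (c : R) (p : R -> R) (q : R) : Prop :=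
  [/\ 0 <= q, c <= p q &
      forall q' : R, 0 <= q' -> c <= p q' -> (p q' - c) * q' <= (p q - c) * q].

Definition retailers n (T : {set option 'I_n}) : {set 'I_n} :=
  [set i : 'I_n | Some i \in T].

(* The RS-game: qS S is the fixed optimal solution for S (entries outside S
   are irrelevant), qc i is the fixed optimal solution at price c. *)
Definition RS_game n (c : R) (w : R -> R) (P : 'I_n -> R -> R)
  (qS : {set 'I_n} -> 'I_n -> R) (qc : 'I_n -> R)
  (T : {set option 'I_n}) : R :=
  let S := retailers T in
  if None \in T then \sum_(i in S) Pi_ret (P i) (qc i) c
  else \sum_(i in S) Pi_ret (P i) (qS S i) (w (\sum_(j in S) qS S j)).

Definition in_core n (v : {set option 'I_n} -> R) (x : option 'I_n -> R) : Prop :=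
  \sum_(k : option 'I_n) x k = v [set: option 'I_n] /\
  forall T : {set option 'I_n}, T \proper [set: option 'I_n] ->
    v T <= \sum_(k in T) x k.

(* beta = min over nonempty S of (v(S_0) - v(S)) / s; the big min is seeded
   with the value at S = N, which is itself one of the terms when n > 0. *)
Definition beta n (v : {set option 'I_n} -> R) : R :=
  let f := fun S : {set 'I_n} =>
    (v (None |: [set Some i | i in S]) - v [set Some i | i in S]) / #|S|%:R in
  \big[Order.min/f [set: 'I_n]]_(S : {set 'I_n} | S != finset.set0) f S.

Definition xi n (v : {set option 'I_n} -> R) (k : option 'I_n) : R :=
  match k with
  | None => n%:R * beta v
  | Some i => v [set None; Some i] - beta v
  end.

End RS.

(* Main.v *)
Require Import Defs.
From mathcomp Require Import all_boot all_order all_algebra.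
From mathcomp Require Import all_classical all_reals all_analysis.
Import Order.TTheory GRing.Theory Num.Theory numFieldNormedType.Exports.
Local Open Scope ring_scope.
Lemma pos_point (R : realType) (c : R) (p : R -> R) :
  cont_on_Rplus p -> c < p 0 -> exists x, 0 < x /\ c < p x.
Proof.
move=> hc hp.
have A0 : [set x : R | 0 <= x]%classic 0 by rewrite /= lexx.
have := hc (0 : subspace [set x : R | 0 <= x]%classic).
rewrite /from_subspace.
move=> /cvgr_gt /(_ c hp).
rewrite /= {1}/nbhs /= -nbhs_subspace_in //.
rewrite /within /= => /nbhs_ballP [e /= e0 he].
exists (e / 2); split; first by rewrite divr_gt0.
apply: he; last by rewrite /= ltW // divr_gt0.
rewrite -ball_normE /= sub0r normrN gtr0_norm ?divr_gt0 //.
by rewrite ltr_pdivrMr // ltr_pMr // ltr1n.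
Qed.

Lemma some_inj (n : nat) : injective (@Some 'I_n).
Proof. by move=> x y []. Qed.

Lemma None_notin (n : nat) (S : {set 'I_n}) : None \notin [set Some i | i in S].
Proof. by apply/imsetP => -[x _]. Qed.

Lemma retailers_S (n : nat) (S : {set 'I_n}) : retailers [set Some i | i in S] = S.
Proof. by apply/setP => i; rewrite /retailers inE mem_imset //; apply: some_inj. Qed.

Lemma retailers_NS (n : nat) (S : {set 'I_n}) :
  retailers (None |: [set Some i | i in S]) = S.
Proof.
by apply/setP => i; rewrite /retailers inE in_setU1 /= mem_imset //; apply: some_inj.
Qed.

Lemma sum_T (R : realType) (n : nat) (F : option 'I_n -> R) (T : {set option 'I_n}) :
  \sum_(k in T) F k = (if None \in T then F None else 0) + \sum_(i in retailers T) F (Some i).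
Proof.
have -> : \sum_(i in retailers T) F (Some i) = \sum_(k in [set Some i | i in retailers T]) F k.
  by rewrite big_imset //= => x y _ _ []. 
have HT : T = if None \in T then None |: [set Some i | i in retailers T]
              else [set Some i | i in retailers T].
  apply/setP => -[i|]; case: ifP => hN.
  - by rewrite in_setU1 /= mem_imset ?inE //; apply: some_inj.
  - by rewrite mem_imset ?inE //; apply: some_inj.
  - by rewrite in_setU1 eqxx.
  - by rewrite (negbTE (None_notin _ _)).
case: ifP HT => hN HT; rewrite [in LHS]HT.
  by rewrite big_setU1 //= None_notin.
by rewrite add0r.
Qed.

Theorem lemma6p2 (R : realType) (n : nat) (c : R) (w : R -> R)
  (P : 'I_n -> R -> R) (qS : {set 'I_n} -> 'I_n -> R) (qc : 'I_n -> R) :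
  (0 < n)%N ->
  RS_situation c w P ->
  (forall S : {set 'I_n}, S != finset.set0 -> optimal_S w P S (qS S)) ->
  (forall i : 'I_n, optimal_c c (P i) (qc i)) ->
  let v := RS_game c w P qS qc in
  in_core v (xi v) /\ 0 < xi v None.
Proof.
move=> n0 hsit hopt hoc v.
pose a i := Pi_ret (P i) (qc i) c.
have vNS (S : {set _}) : v (None |: [set Some i | i in S]) = \sum_(i in S) a i.
  by rewrite /v /RS_game setU11 retailers_NS.
have vS (S : {set _}) : v [set Some i | i in S] =
   \sum_(i in S) Pi_ret (P i) (qS S i) (w (\sum_(j in S) qS S j)).
  by rewrite /v /RS_game (negbTE (None_notin _ _)) retailers_S.
have apos i : 0 < a i.
  have [hw _ [_ hc] hp0 _] := hsit i.
  have [x [x0 hx]] := pos_point _ _ _ hc (lt_trans (hw 0 (lexx _)) hp0).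
  have [_ _ ho] := hoc i.
  apply: lt_le_trans (ho x (ltW x0) (ltW hx)).
  by apply: mulr_gt0 => //; rewrite subr_gt0.
have key (S : {set _}) : S != finset.set0 -> v [set Some i | i in S] < \sum_(i in S) a i.
  move=> hS; rewrite vS.
  have [hfe _] := hopt S hS.
  set Q := \sum_(j in S) qS S j.
  have Q0 : 0 <= Q by apply: sumr_ge0 => j /hfe [].
  have [k kS] := set0Pn _ hS.
  have [hw _ _ _ _] := hsit k.
  have cQ := hw Q Q0.
  apply: ltr_sum; first by apply/hasP; exists k => //; rewrite mem_index_enum.
  move=> i iS; have [qi0 hPi] := hfe i iS.
  have [_ _ ho] := hoc i.
  have cP : c <= P i (qS S i) := ltW (lt_le_trans cQ hPi).
  have := ho _ qi0 cP; rewrite /Pi_ret -/(Pi_ret _ _ _) -/(a i) => hle.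
  case: (eqVneq (qS S i) 0) => [->|qn0]; first by rewrite mulr0.
  apply: lt_le_trans hle; rewrite ltr_pM2r; last by rewrite lt_def qn0.
  by rewrite ltrD2l ltrN2.
pose f := fun S : {set 'I_n} =>
    (v (None |: [set Some i | i in S]) - v [set Some i | i in S]) / #|S|%:R.
have fpos S : S != finset.set0 -> 0 < f S.
  move=> hS; rewrite /f divr_gt0 //; first by rewrite subr_gt0 vNS key.
  by rewrite ltr0n card_gt0.
have hT : [set: 'I_n] != finset.set0.
  by apply/set0Pn; exists (Ordinal n0).
have bpos : 0 < beta v.
  rewrite /beta -/f; apply: lt_bigmin; first exact: fpos.
  exact: fpos.
have ble S : S != finset.set0 -> beta v <= f S.
  by move=> hS; rewrite /beta -/f; apply: bigmin_le_cond.
have xiS i : xi v (Some i) = a i - beta v.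
  by rewrite /xi -(imset_set1 Some i) vNS big_set1.
split; last by rewrite /xi mulr_gt0 // ltr0n.
split.
  have -> : \sum_(k : option 'I_n) xi v k = \sum_(k in [set: option 'I_n]) xi v k.
    by apply: eq_bigl => k; rewrite inE.
  rewrite (sum_T _ _ (xi v) [set: option _]) finset.in_setT.
  have -> : retailers [set: option 'I_n] = [set: 'I_n].
    by apply/setP => i; rewrite /retailers !inE.
  under eq_bigr => i _ do rewrite xiS.
  rewrite sumrB sumr_const cardsT card_ord /v /RS_game finset.in_setT /=.
  have -> : retailers [set: option 'I_n] = [set: 'I_n].
    by apply/setP => i; rewrite /retailers !inE.
  by rewrite /xi mulr_natl addrC subrK.
move=> T _.
rewrite sum_T.
under eq_bigr => i _ do rewrite xiS.
rewrite sumrB sumr_const.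
set S := retailers T.
case: ifP => hN.
  have -> : v T = \sum_(i in S) a i by rewrite /v /RS_game hN.
  rewrite /xi.
  have hs : (#|S| <= n)%N by rewrite -[X in (_ <= X)%N]card_ord max_card.
  have : beta v *+ #|S| <= n%:R * beta v.
    rewrite -[_ *+ #|S|]mulr_natl; apply: ler_wpM2r; [exact: ltW | by rewrite ler_nat].
  move: (beta v *+ #|S|) (\sum_(i in S) a i) (n%:R * beta v) => X A Y h.
  by rewrite addrA lerBrDr addrC lerD2l.
have hT' : T = [set Some i | i in S].
  apply/setP => -[i|].
    by rewrite mem_imset ?inE //; apply: some_inj.
  by rewrite (negbTE (None_notin _ _)) hN.
rewrite add0r hT'.
case: (eqVneq S finset.set0) => [->|hS].
  by rewrite vS !big_set0 cards0 mulr0n subr0.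
have := ble S hS; rewrite /f vNS.
rewrite ler_pdivlMr ?ltr0n ?card_gt0 // => h.
by rewrite -mulr_natr lerBrDr -lerBrDl.
Qed.
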